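(* Let $(X,\|\cdot\|)$ be an extended Banach space and let $\tau_F$ be its finest locally convex topology. Then $(X,\tau_F)$ is barreled, i.e. every absolutely convex, absorbing subset of $X$ that is closed in $(X,\tau_F)$ is a neighborhood of $0_X$ in $(X,\tau_F)$.
   Context: An extended norm on a vector space $X$ over $\mathbb{R}$ or $\mathbb{C}$ is a map $\|\cdot\|:X\to[0,\infty]$ with $\|x\|=0$ iff $x=0_X$, $\|\alpha x\|=|\alpha|\|x\|$, and $\|x+y\|\le\|x\|+\|y\|$; $X$ carries the topology with basic neighborhoods $\{y:\|y-x\|<\varepsilon\}$. $(X,\|\cdot\|)$ is an extended Banach space if every Cauchy sequence (w.r.t. the extended metric $\|x-y\|$) converges. A locally convex topology on $X$ is one induced by a family of finite-valued seminorms. The finest locally convex topology $\tau_F$ is the locally convex topology coarser than the extended norm topology such that every locally convex topology coarser than the extended norm topology is coarser than $\tau_F$. *)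

(* Defs.v *)
From HB Require Import structures.
From mathcomp Require Import all_boot all_order all_algebra.
From mathcomp Require Import boolp classical_sets cardinality constructive_ereal reals.
From mathcomp Require Export complex.

Set Implicit Arguments.
Unset Strict Implicit.
Unset Printing Implicit Defensive.

Import Order.TTheory GRing.Theory Num.Theory.
Local Open Scope classical_set_scope.
Local Open Scope ring_scope.

(* Everything is stated over a scalar field K : numFieldType (instantiated in
   the theorem with K = R and K = R[i] for R : realType).  Extended norms take
   values in the extended line \bar K; nonnegativity forces the values to be
   nonnegative elements of K (i.e. nonnegative reals) or +oo. *)

Section Defs.
Context {K : numFieldType} {X : lmodType K}.

Definition is_extended_norm (N : X -> \bar K) : Prop :=
  [/\ (forall x, (0 <= N x)%E),
      (forall x, N x = 0%E <-> x = 0),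
      (forall (a : K) x, N (a *: x) = (`|a|%:E * N x)%E) &
      (forall x y, (N (x + y)%R <= N x + N y)%E)].

Definition enorm_cauchy (N : X -> \bar K) (u : nat -> X) : Prop :=
  forall e : K, 0 < e -> exists n0 : nat, forall m n : nat,
    (n0 <= m)%N -> (n0 <= n)%N -> (N (u m - u n)%R < e%:E)%E.

Definition enorm_converges (N : X -> \bar K) (u : nat -> X) (l : X) : Prop :=
  forall e : K, 0 < e -> exists n0 : nat, forall n : nat,
    (n0 <= n)%N -> (N (u n - l)%R < e%:E)%E.

Definition is_extended_banach (N : X -> \bar K) : Prop :=
  is_extended_norm N /\
  forall u : nat -> X, enorm_cauchy N u -> exists l : X, enorm_converges N u l.

(* A topology on X is represented by its family of open sets. *)

Definition enorm_topology (N : X -> \bar K) : set (set X) :=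
  [set U | forall x, U x -> exists e : K, 0 < e /\
     [set y | (N (y - x)%R < e%:E)%E] `<=` U].

Definition is_seminorm (p : X -> K) : Prop :=
  [/\ (forall x, 0 <= p x),
      (forall (a : K) x, p (a *: x) = `|a| * p x) &
      (forall x y, p (x + y) <= p x + p y)].

Definition seminorm_topology (P : set (X -> K)) : set (set X) :=
  [set U | forall x, U x -> exists (F : set (X -> K)) (e : K),
     [/\ finite_set F, F `<=` P, 0 < e &
         [set y | forall p, F p -> p (y - x) < e] `<=` U]].

Definition locally_convex_topology (tau : set (set X)) : Prop :=
  exists P : set (X -> K), (forall p, P p -> is_seminorm p) /\
                           tau = seminorm_topology P.

Definition coarser (tau1 tau2 : set (set X)) : Prop := tau1 `<=` tau2.

Definition is_finest_lc_topology (N : X -> \bar K) (tau : set (set X)) : Prop :=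
  [/\ locally_convex_topology tau,
      coarser tau (enorm_topology N) &
      forall tau', locally_convex_topology tau' ->
        coarser tau' (enorm_topology N) -> coarser tau' tau].

Definition absolutely_convex (A : set X) : Prop :=
  forall x y (a b : K), A x -> A y -> `|a| + `|b| <= 1 -> A (a *: x + b *: y).

Definition absorbing (A : set X) : Prop :=
  forall x, exists r : K, 0 < r /\ forall a : K, `|a| <= r -> A (a *: x).

Definition closed_in (tau : set (set X)) (A : set X) : Prop := tau (~` A).

Definition nbhs0_in (tau : set (set X)) (A : set X) : Prop :=
  exists U, [/\ tau U, U 0 & U `<=` A].

Definition barreled (tau : set (set X)) : Prop :=
  forall A : set X, absolutely_convex A -> absorbing A -> closed_in tau A ->
    nbhs0_in tau A.

End Defs.

(* Main.v *)
Require Import Defs.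
From HB Require Import structures.
From mathcomp Require Import all_boot all_order all_algebra.
From mathcomp Require Import boolp classical_sets cardinality constructive_ereal reals.
From mathcomp Require Import complex.
From mathcomp Require Import ring lra.
Import Order.TTheory GRing.Theory Num.Theory.
Local Open Scope classical_set_scope.
Local Open Scope ring_scope.


Section Norm.
Context {K : numFieldType} {X : lmodType K} {N : X -> \bar K}.
Hypothesis hN : is_extended_norm N.

Lemma N_ge0 x : (0 <= N x)%E.
Proof. by case: hN. Qed.

Lemma N0 : N 0 = 0%E.
Proof. by case: hN => _ h _ _; apply/h. Qed.

Lemma NZ a x : N (a *: x) = (`|a|%:E * N x)%E.
Proof. by case: hN. Qed.

Lemma Ntri x y : (N (x + y) <= N x + N y)%E.
Proof. by case: hN. Qed.

Lemma Nfin x e : (N x < e%:E)%E -> exists v, N x = v%:E /\ 0 <= v /\ v < e.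
Proof.
move=> h; have h0 := N_ge0 x; move: h h0; case: (N x) => [v| |] //=.
by rewrite lte_fin lee_fin => h1 h2; exists v.
Qed.

Lemma NN x : N (- x) = N x.
Proof. by rewrite -scaleN1r NZ normrN normr1 mul1e. Qed.

Lemma Nlt0 e : 0 < e -> (N 0 < e%:E)%E.
Proof. by move=> e0; rewrite N0 lte_fin. Qed.

Lemma tri_lt x y e1 e2 : (N x < e1%:E)%E -> (N y < e2%:E)%E ->
  (N (x + y) < (e1 + e2)%:E)%E.
Proof.
move=> /Nfin [u [eu [_ hu]]] /Nfin [v [ev [_ hv]]].
apply: (le_lt_trans (Ntri x y)); rewrite eu ev -EFinD lte_fin; exact: ltrD.
Qed.

Lemma tri_sub x y e1 e2 : (N x < e1%:E)%E -> (N y < e2%:E)%E ->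
  (N (x - y) < (e1 + e2)%:E)%E.
Proof. by move=> h1 h2; apply: tri_lt => //; rewrite NN. Qed.

Lemma scale_lt a x e : 0 < `|a| -> (N x < e%:E)%E -> (N (a *: x) < (`|a| * e)%:E)%E.
Proof.
move=> a0 /Nfin [v [hv [_ hve]]]; rewrite NZ hv -EFinM lte_fin.
by rewrite ltr_pM2l.
Qed.

Lemma lt_le_e x e1 e2 : (N x < e1%:E)%E -> e1 <= e2 -> (N x < e2%:E)%E.
Proof. by move=> h le; apply: (lt_le_trans h); rewrite lee_fin. Qed.

End Norm.

Section Balanced.
Context {K : numFieldType} {X : lmodType K} {A : set X}.
Hypothesis Aac : absolutely_convex A.

Lemma bal x c : A x -> `|c| <= 1 -> A (c *: x).
Proof.
move=> Ax c1; have := Aac x x c 0 Ax Ax; rewrite normr0 addr0 scale0r addr0.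
exact.
Qed.
End Balanced.



Section Baire.
Context {K : numFieldType} {X : lmodType K} (N : X -> \bar K) (A : set X).
Hypothesis hN : is_extended_norm N.
Hypothesis Aac : absolutely_convex A.
Hypothesis Aab : absorbing A.
Hypothesis Aop : enorm_topology N (~` A).

Lemma half_half : `|1/2:K| + `|1/2| <= 1.
Proof.
rewrite ger0_norm ?divr_ge0 //.
have -> : (1/2:K) + 1/2 = 1 by field.
by [].
Qed.

Lemma escape c x r : 0 < c -> 0 < r ->
  (forall r, 0 < r -> exists y, (N y < r%:E)%E /\ ~ A y) ->
  exists y, (N (y - x) < r%:E)%E /\ ~ A (c *: y).
Proof.
move=> c0 r0 noball.
case: (pselect (A (c *: x))) => hx; last by exists x; rewrite subrr (Nlt0 hN).
have [z [hz nz]] : exists z, (N z < (c * r / 2)%:E)%E /\ ~ A z.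
  by apply: noball; rewrite !divr_gt0 ?mulr_gt0.
have c0' : c != 0 by rewrite gt_eqF.
exists (x + (2 / c) *: z); split.
  rewrite addrAC subrr add0r.
  have -> : r = `|2/c| * (c*r/2).
    by rewrite gtr0_norm ?divr_gt0 //; field.
  apply: (scale_lt hN) => //; by rewrite normr_gt0 mulf_neq0 ?invr_eq0 ?pnatr_eq0.
move=> hy; apply: nz.
have hn : A ((-1) *: (c *: x)) by apply: bal => //; rewrite normrN1.
have := Aac _ _ _ _ hy hn half_half.
congr A.
rewrite !scalerDr !scalerA.
have -> : 1 / 2 * c * (2 / c) = 1 :> K by field.
have -> : 1 / 2 * -1 * c = - (1 / 2 * c) :> K by ring.
by rewrite scale1r scaleNr addrAC subrr add0r.
Qed.

Lemma open_out c y : 0 < c -> ~ A (c *: y) ->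
  exists rho, 0 < rho /\ forall z, (N (z - y) < rho%:E)%E -> ~ A (c *: z).
Proof.
move=> c0 ny.
have [e [e0 he]] := Aop _ ny.
exists (e / c); split; first by rewrite divr_gt0.
move=> z hz; apply: (he (c *: z)) => /=.
rewrite -scalerBr.
have -> : e = `|c| * (e / c).
  by rewrite gtr0_norm // mulrC divfK // gt_eqF.
by apply: (scale_lt hN) => //; rewrite normr_gt0 gt_eqF.
Qed.


Definition hm (a b : K) := a * b / (a + b).

Lemma hm_gt0 {a b : K} : 0 < a -> 0 < b -> 0 < hm a b.
Proof. by move=> a0 b0; rewrite /hm divr_gt0 ?mulr_gt0 ?addr_gt0. Qed.

Lemma hm_lel {a b : K} : 0 < a -> 0 < b -> hm a b <= a.
Proof.
move=> a0 b0; rewrite /hm ler_pdivrMr ?addr_gt0 // ler_pM2l // lerDr ltW //.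
Qed.

Lemma hm_ler {a b : K} : 0 < a -> 0 < b -> hm a b <= b.
Proof.
move=> a0 b0; rewrite /hm ler_pdivrMr ?addr_gt0 // mulrC ler_pM2l // lerDl ltW //.
Qed.

Hypothesis hC : forall u, enorm_cauchy N u -> exists l, enorm_converges N u l.
Hypothesis archi : forall e : K, 0 < e -> exists n : nat, (n.+1%:R)^-1 < e.

Lemma step (noball : forall r, 0 < r -> exists y, (N y < r%:E)%E /\ ~ A y)
  j x r : 0 < r -> exists p : X * K,
  [/\ 0 < p.2, p.2 <= r/2, p.2 <= (j.+1%:R)^-1, (N (p.1 - x) < (r/2)%:E)%E &
      forall z, (N (z - p.1) < (p.2 + p.2)%:E)%E -> ~ A ((j.+1%:R)^-1 *: z)].
Proof.
move=> r0.
have c0 : 0 < (j.+1%:R : K)^-1 by rewrite invr_gt0 ltr0Sn.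
have r20 : 0 < r / 2 by rewrite divr_gt0.
have [y [hy ny]] := escape _ x _ c0 r20 noball.
have [rho [rho0 hrho]] := open_out _ _ c0 ny.
have rh0 : 0 < rho / 2 by rewrite divr_gt0.
have h1 := hm_gt0 rh0 r20.
exists (y, hm (hm (rho/2) (r/2)) (j.+1%:R)^-1) => /=; split.
- exact: hm_gt0.
- exact: le_trans (hm_lel h1 c0) (hm_ler rh0 r20).
- exact: hm_ler.
- exact: hy.
move=> z hz; apply: hrho; apply: (lt_le_e _ _ _ hz).
have hle : hm (hm (rho / 2) (r / 2)) (j.+1%:R)^-1 <= rho / 2.
  exact: le_trans (hm_lel h1 c0) (hm_lel rh0 r20).
by rewrite [leRHS](splitr rho); apply: lerD.
Qed.


Lemma baire : exists r, 0 < r /\ forall y, (N y < r%:E)%E -> A y.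
Proof.
apply: contrapT => Hno.
have noball : forall r, 0 < r -> exists y, (N y < r%:E)%E /\ ~ A y.
  move=> r r0; apply: contrapT => H; apply: Hno; exists r; split => // y hy.
  by apply: contrapT => ny; apply: H; exists y.
pose Q (a : nat * (X * K)) (p : X * K) := 0 < a.2.2 ->
  [/\ 0 < p.2, p.2 <= a.2.2/2, p.2 <= (a.1.+1%:R)^-1,
      (N (p.1 - a.2.1) < (a.2.2/2)%:E)%E &
      forall z, (N (z - p.1) < (p.2 + p.2)%:E)%E -> ~ A ((a.1.+1%:R)^-1 *: z)].
have [f hf] : {f : nat * (X * K) -> X * K & forall a, Q a (f a)}.
  apply: choice => -[j [x r]].
  case: (pselect (0 < r)) => r0.
    have [p hp] := step noball j x r r0; by exists p.
  by exists (x, r).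
pose s := fix s n := match n with 0 => f (0%N, (0, 1)) | m.+1 => f (m.+1, s m) end.
pose xs n := (s n).1; pose rs n := (s n).2.
have pos : forall n, 0 < rs n.
  elim=> [|n IH]; first by have [] := hf (0%N, (0, 1)) ltr01.
  by have [] := hf (n.+1, s n) IH.
have P n : rs n <= (n.+1%:R)^-1 /\
    forall z, (N (z - xs n) < (rs n + rs n)%:E)%E -> ~ A ((n.+1%:R)^-1 *: z).
  case: n => [|n]; first by have [] := hf (0%N, (0, 1)) ltr01.
  by have [] := hf (n.+1, s n) (pos n).
have nest n z : (N (z - xs n.+1) < (rs n.+1)%:E)%E -> (N (z - xs n) < (rs n)%:E)%E.
  have [_ h2 _ h4 _] := hf (n.+1, s n) (pos n).
  move=> hz; have := tri_lt hN _ _ _ _ hz h4.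
  rewrite addrA subrK => h; apply: (lt_le_e _ _ _ h).
  by rewrite [leRHS](splitr (rs n)) lerD2r.
have chain d k z : (N (z - xs (k + d)%N) < (rs (k + d)%N)%:E)%E ->
    (N (z - xs k) < (rs k)%:E)%E.
  elim: d z => [|d IH] z; first by rewrite addn0.
  by rewrite addnS => /nest; apply: IH.
have ball k m : (k <= m)%N -> (N (xs m - xs k) < (rs k)%:E)%E.
  move=> km; apply: (chain (m - k)%N); rewrite subnKC // subrr.
  exact: Nlt0.
have cau : enorm_cauchy N xs.
  move=> e e0.
  have [n0 hn0] := archi (e/2) (divr_gt0 e0 (ltr0Sn _ 1)).
  exists n0 => m n hm hn.
  have := tri_sub hN _ _ _ _ (ball _ _ hm) (ball _ _ hn).
  rewrite opprB addrA subrK => h; apply: (lt_le_e _ _ _ h).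
  rewrite [leRHS](splitr e); apply: lerD; apply: ltW;
   exact: le_lt_trans (proj1 (P n0)) hn0.
have [l hl] := hC _ cau.
have notA k : ~ A ((k.+1%:R)^-1 *: l).
  apply: (proj2 (P k)).
  have [n1 hn1] := hl _ (pos k).
  have h1 := hn1 (maxn n1 k) (leq_maxl _ _).
  have h2 := ball k (maxn n1 k) (leq_maxr _ _).
  have := tri_sub hN _ _ _ _ h2 h1.
  by rewrite opprB addrC addrA subrK.
have [rho [rho0 hrho]] := Aab l.
have [k hk] := archi _ rho0.
apply: (notA k); apply: hrho.
by rewrite ger0_norm ?invr_ge0 ?ler0n // ltW.
Qed.

End Baire.



Section Mink.
Context {R : realType} {K : numFieldType} (emb : {rmorphism R -> K}).
Hypothesis emb_le : forall s t, (emb s <= emb t) = (s <= t).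
Hypothesis emb_onto : forall a : K, 0 <= a -> exists t, a = emb t.
Context {X : lmodType K} {A : set X}.
Hypothesis Aac : absolutely_convex A.
Hypothesis Aab : absorbing A.

Lemma emb_lt s t : (emb s < emb t) = (s < t).
Proof. by rewrite !lt_neqAle emb_le (inj_eq (fmorph_inj emb)). Qed.

Lemma emb_gt0 t : (0 < emb t) = (0 < t).
Proof. by rewrite -(rmorph0 emb) emb_lt. Qed.

Lemma emb_ge0 t : (0 <= emb t) = (0 <= t).
Proof. by rewrite -(rmorph0 emb) emb_le. Qed.

Lemma emb_norm t : `|emb t| = emb `|t|.
Proof.
have [t0|t0] := leP 0 t.
  by rewrite !ger0_norm ?emb_ge0.
have e0 : emb t < 0 by rewrite -(rmorph0 emb) emb_lt.
by rewrite (ltr0_norm e0) (ltr0_norm t0) rmorphN.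
Qed.

Lemma emb_neq0 t : 0 < t -> emb t != 0.
Proof. by move=> t0; rewrite gt_eqF // emb_gt0. Qed.

Definition S (x : X) := [set t : R | 0 < t /\ A ((emb t)^-1 *: x)].
Definition qR (x : X) := inf (S x).

Lemma A0 : A 0.
Proof. have [r [r0 h]] := Aab 0; have := h 0; rewrite scaler0 normr0; apply; exact: ltW. Qed.

Lemma S_n0 x : S x !=set0.
Proof.
have [rho [rho0 hrho]] := Aab x.
have [u hu] := emb_onto _ (ltW rho0).
have u0 : 0 < u by rewrite -emb_gt0 -hu.
exists u^-1; split; first by rewrite invr_gt0.
rewrite fmorphV invrK; apply: hrho.
by rewrite hu emb_norm ger0_norm // ltW.
Qed.

Lemma S_lb x : has_lbound (S x).
Proof. by exists 0 => t [t0 _]; apply: ltW. Qed.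

Lemma qR_ge0 x : 0 <= qR x.
Proof. by apply: lb_le_inf; [exact: S_n0 | move=> t [t0 _]; apply: ltW]. Qed.

Lemma upS x s t : S x s -> s <= t -> S x t.
Proof.
move=> [s0 hs] st.
have t0 : 0 < t by apply: lt_le_trans st.
split => //.
have -> : (emb t)^-1 *: x = (emb s / emb t) *: ((emb s)^-1 *: x).
  rewrite scalerA; congr (_ *: _); field.
  by rewrite !emb_neq0.
apply: bal => //.
have s0' := ltW s0; have t0' := ltW t0.
rewrite normrM normfV !emb_norm !ger0_norm //.
by rewrite ler_pdivrMr ?emb_gt0 // mul1r emb_le.
Qed.

Lemma gtS x t : qR x < t -> S x t.
Proof.
move=> h.
have h' : 0 < t - qR x by rewrite subr_gt0.
have [e he elt] := @inf_adherent R (S x) (t - qR x) h' (conj (S_n0 x) (S_lb x)).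
apply: (upS _ _ _ he); rewrite /qR in elt *; lra.
Qed.

Lemma leS x t : S x t -> qR x <= t.
Proof. by move=> h; apply: ge_inf => //; exact: S_lb. Qed.

Lemma qR0 : qR 0 = 0.
Proof.
apply/eqP; rewrite eq_le qR_ge0 andbT.
apply: contrapT => /negP; rewrite -ltNge => h.
have : qR 0 <= qR 0 / 2.
  apply: leS; split; first by rewrite divr_gt0.
  by rewrite scaler0; exact: A0.
lra.
Qed.

Lemma S_scale a x u t : a != 0 -> `|a| = emb u -> S x t -> S (a *: x) (u * t).
Proof.
move=> a0 hu [t0 ht].
have u0 : 0 < u by rewrite -emb_gt0 -hu normr_gt0.
split; first by rewrite mulr_gt0.
have -> : (emb (u * t))^-1 *: (a *: x) = (a / `|a|) *: ((emb t)^-1 *: x).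
  rewrite !scalerA rmorphM hu; congr (_ *: _); field.
  by rewrite !emb_neq0.
apply: bal => //.
by rewrite normrM normfV normr_id divff // normr_eq0.
Qed.

Lemma qR_scale_le a x u : a != 0 -> `|a| = emb u -> qR (a *: x) <= u * qR x.
Proof.
move=> a0 hu.
have u0 : 0 < u by rewrite -emb_gt0 -hu normr_gt0.
rewrite -ler_pdivrMl //; apply: lb_le_inf; first exact: S_n0.
move=> t ht; rewrite ler_pdivrMl //; apply: leS; exact: S_scale.
Qed.

Lemma qR_scale a x u : `|a| = emb u -> qR (a *: x) = u * qR x.
Proof.
move=> hu.
have [a0'|a0] := eqVneq a 0.
  rewrite a0' in hu *; move: hu; rewrite normr0 scale0r qR0 -(rmorph0 emb) => /(fmorph_inj emb) <-.
  by rewrite mul0r.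
have u0 : 0 < u by rewrite -emb_gt0 -hu normr_gt0.
apply/eqP; rewrite eq_le qR_scale_le //=.
have hv : `|a^-1| = emb u^-1 by rewrite normfV hu fmorphV.
have := qR_scale_le _ (a *: x) _ (invr_neq0 a0) hv.
rewrite scalerA mulVf // scale1r => h.
by rewrite -ler_pdivlMl.
Qed.

Lemma S_add x y s t : S x s -> S y t -> S (x + y) (s + t).
Proof.
move=> [s0 hs] [t0 ht].
have st0 : 0 < s + t by rewrite addr_gt0.
split => //.
have -> : (emb (s + t))^-1 *: (x + y) =
   (emb s / emb (s + t)) *: ((emb s)^-1 *: x) + (emb t / emb (s + t)) *: ((emb t)^-1 *: y).
  rewrite !scalerA scalerDr; congr (_ *: _ + _ *: _).
    by field; rewrite -?rmorphD !emb_neq0.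
  by field; rewrite -?rmorphD !emb_neq0.
apply: Aac => //.
have s0' := ltW s0; have t0' := ltW t0.
rewrite !normrM !normfV !emb_norm !ger0_norm //.
have -> : emb s / emb (s + t) + emb t / emb (s + t) = 1.
  by field; rewrite -?rmorphD !emb_neq0.
  by [].
exact: ltW.
Qed.

Lemma qR_add x y : qR (x + y) <= qR x + qR y.
Proof.
have h1 : forall t, S y t -> qR (x + y) - t <= qR x.
  move=> t ht; apply: lb_le_inf; first exact: S_n0.
  move=> s hs; have := leS _ _ (S_add _ _ _ _ hs ht); lra.
have : qR (x + y) - qR x <= qR y.
  apply: lb_le_inf; first exact: S_n0.
  move=> t ht; have := h1 t ht; lra.
lra.
Qed.

Lemma qR_lt1 x : qR x < 1 -> A x.
Proof. by move=> /gtS [_]; rewrite rmorph1 invr1 scale1r. Qed.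

Definition q (x : X) : K := emb (qR x).

Lemma q_seminorm : is_seminorm q.
Proof.
split.
- by move=> x; rewrite /q emb_ge0 qR_ge0.
- move=> a x; have [u hu] := emb_onto _ (normr_ge0 a).
  by rewrite /q (qR_scale _ _ _ hu) rmorphM hu.
- by move=> x y; rewrite /q -rmorphD emb_le qR_add.
Qed.

End Mink.



Section Main.
Context {R : realType} {K : numFieldType} (emb : {rmorphism R -> K}).
Hypothesis emb_le : forall s t, (emb s <= emb t) = (s <= t).
Hypothesis emb_onto : forall a : K, 0 <= a -> exists t, a = emb t.

Lemma archiK (e : K) : 0 < e -> exists n : nat, (n.+1%:R)^-1 < e.
Proof.
move=> e0; have [t ht] := emb_onto _ (ltW e0).
have t0 : 0 < t by rewrite -(emb_gt0 emb emb_le) -ht.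
have ti : 0 <= t^-1 by rewrite invr_ge0 ltW.
have hm := archi_boundP ti.
exists (Num.Def.archi_bound t^-1).
rewrite ht -(rmorph_nat emb) -fmorphV (emb_lt emb emb_le).
rewrite invf_plt ?posrE ?ltr0Sn //.
apply: lt_trans hm _; by rewrite ltr_nat.
Qed.

Lemma barreled_gen (X : lmodType K) (N : X -> \bar K) (tau : set (set X)) :
  is_extended_banach N -> is_finest_lc_topology N tau -> barreled tau.
Proof.
move=> [hN hC] [lc coarse fin] A Aac Aab Acl.
have Aop : enorm_topology N (~` A) := coarse _ Acl.
have [r [r0 hr]] := baire N A hN Aac Aab Aop hC archiK.
pose qq := q emb (A := A).
have qs : is_seminorm qq := q_seminorm emb emb_le emb_onto Aac Aab.
have [qs0 qsZ qsD] := qs.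
have qball : forall z d, 0 < d -> (N z < (r * emb d)%:E)%E -> qR emb (A:=A) z <= d.
  move=> z d d0 hz; apply: leS; split => //.
  apply: hr.
  have ed0 : 0 < emb d by rewrite (emb_gt0 emb emb_le).
  have := scale_lt hN ((emb d)^-1) z (r * emb d) _ hz.
  rewrite normfV (emb_norm emb emb_le) ger0_norm ?ltW //.
  have -> : (emb d)^-1 * (r * emb d) = r.
    by field; rewrite gt_eqF.
  by apply; rewrite invr_gt0.
pose tau' := seminorm_topology [set qq].
have lc' : locally_convex_topology tau'.
  by exists [set qq]; split => // p ->.
have coarse' : coarser tau' (enorm_topology N).
  move=> U hU x Ux.
  have [F [e [fF FP e0 sub]]] := hU x Ux.
  have [te hte] := emb_onto _ (ltW e0).
  have te0 : 0 < te by rewrite -(emb_gt0 emb emb_le) -hte.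
  exists (r * emb (te / 2)); split.
    by rewrite mulr_gt0 // (emb_gt0 emb emb_le) divr_gt0.
  move=> y hy; apply: sub => p Fp.
  rewrite (FP p Fp) /qq /q hte (emb_lt emb emb_le).
  apply: le_lt_trans (qball _ _ _ hy) _; first by rewrite divr_gt0.
  lra.
have sub := fin tau' lc' coarse'.
exists [set x | qq x < 1]; split.
- apply: sub => x hx; exists [set qq], (1 - qq x); split.
  + exact: finite_set1.
  + by [].
  + by rewrite subr_gt0.
  move=> y hy; have := hy qq erefl => h /=.
  have -> : y = x + (y - x) by rewrite addrC subrK.
  apply: le_lt_trans (qsD _ _) _.
  by rewrite -ltrBrDl.
- by rewrite /= /qq /q (qR0 emb emb_le emb_onto Aab) rmorph0 ltr01.
- move=> x /= hx; apply: (qR_lt1 emb emb_le emb_onto Aac Aab).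
  by rewrite -(emb_lt emb emb_le) rmorph1.
Qed.

End Main.



Theorem theorem5p18 (R : realType) :
  (forall (X : lmodType R) (N : X -> \bar R) (tau : set (set X)),
      is_extended_banach N -> is_finest_lc_topology N tau -> barreled tau) /\
  (forall (X : lmodType R[i]) (N : X -> \bar R[i]) (tau : set (set X)),
      is_extended_banach N -> is_finest_lc_topology N tau -> barreled tau).
Proof.
split.
- apply: (barreled_gen (idfun : {rmorphism R -> R})) => //.
  by move=> a _; exists a.
- apply: (barreled_gen (real_complex R)).
    by move=> s t; rewrite lecR.
  case=> a1 a2; rewrite lecE /= => /andP [/eqP -> h]; by exists a1.
Qed.
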